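(* For any finite simple graph $G$ of order $n$ with $v_{even}(G)=1$, $\gamma_s'(G)\le n-1$.
   Context: A signed edge domination function (SEDF) of $G$ is $f:E(G)\to\{1,-1\}$ with $\sum_{e'\in E_G(u)\cup E_G(v)}f(e')\ge1$ for every edge $uv$, where $E_G(x)$ is the set of edges incident with $x$; $\gamma_s'(G)$ is the minimum of $\sum_{e\in E(G)}f(e)$ over all SEDFs. $v_{even}(G)$ is the number of vertices of even degree in $G$. *)

(* Defs.v *)
From mathcomp Require Import all_boot all_order all_algebra.
Set Implicit Arguments. Unset Strict Implicit. Unset Printing Implicit Defensive.
Import Order.TTheory GRing.Theory Num.Theory.

(* A finite simple graph: vertex type T : finType, adjacency adj : rel T,
   assumed symmetric and irreflexive (hypotheses of the theorem). *)

Section Graph.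
Variables (T : finType) (adj : rel T).

Definition edges : {set {set T}} :=
  [set e : {set T} | [exists x, exists y, adj x y && (e == [set x; y])]].

Definition deg (v : T) : nat := #|[set w | adj v w]|.
Definition v_even : nat := #|[set v : T | ~~ odd (deg v)]|.

(* A function E(G) -> {1,-1}, encoded by a boolean: true = 1, false = -1.
   Values on non-edges are irrelevant. *)
Definition sgn (b : bool) : int := if b then 1%R else (-1)%R.

Definition closed_sum (f : {ffun {set T} -> bool}) (u v : T) : int :=
  (\sum_(e in edges | (u \in e) || (v \in e)) sgn (f e))%R.

Definition is_SEDF (f : {ffun {set T} -> bool}) : bool :=
  [forall u, forall v, adj u v ==> (1 <= closed_sum f u v)%R].

Definition weight (f : {ffun {set T} -> bool}) : int :=
  (\sum_(e in edges) sgn (f e))%R.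

(* The all-(+1) function is an
   SEDF of weight |E|, which is the maximum possible weight, so |E| as the
   neutral element of the min does not change the value. *)
Definition gamma_s' : int :=
  \big[Order.min/(Posz #|edges|)]_(f : {ffun {set T} -> bool} | is_SEDF f) weight f.

End Graph.

(* Main.v *)
Require Import Defs.
From mathcomp Require Import all_boot all_order all_algebra.
From mathcomp Require Import zify.
Set Implicit Arguments. Unset Strict Implicit. Unset Printing Implicit Defensive.

Definition wfE (T : finType) (E : {set {set T}}) :=
  forall e, e \in E -> exists x y, x != y /\ e = [set x; y].
Definition dg (T : finType) (E : {set {set T}}) (v : T) := #|[set e in E | v \in e]|.
Definition ps (T : finType) (E : {set {set T}}) (f : {ffun {set T} -> bool}) (v : T) :=
  #|[set e in E | (v \in e) && f e]|.
Definition ng (T : finType) (E : {set {set T}}) (f : {ffun {set T} -> bool}) (v : T) :=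
  #|[set e in E | (v \in e) && ~~ f e]|.
Definition PP (T : finType) (E : {set {set T}}) (f : {ffun {set T} -> bool}) :=
  #|[set e in E | f e]|.
Definition NN (T : finType) (E : {set {set T}}) (f : {ffun {set T} -> bool}) :=
  #|[set e in E | ~~ f e]|.
Definition NI (T : finType) (E : {set {set T}}) := [set v : T | 0 < dg E v].
Definition EV (T : finType) (E : {set {set T}}) :=
  [set v : T | (0 < dg E v) && ~~ odd (dg E v)].
Definition star (T : finType) (E : {set {set T}}) (f : {ffun {set T} -> bool}) :=
  forall v, 0 < dg E v -> ng E f v < ps E f v.
Definition bnd (T : finType) (E : {set {set T}}) (f : {ffun {set T} -> bool}) :=
  PP E f + (0 < #|NI E|) <= NN E f + #|NI E| + (#|EV E| == 2).
Definition upd (T : finType) (f : {ffun {set T} -> bool}) (e : {set T}) (b : bool) :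
  {ffun {set T} -> bool} := [ffun x => if x == e then b else f x].

Lemma cardD1p (T : finType) (E : {set {set T}}) e (p : pred {set T}) :
  e \in E -> #|[set x in E | p x]| = p e + #|[set x in E :\ e | p x]|.
Proof.
move=> eE; rewrite (cardsD1 e [set x in E | p x]) inE eE /=.
congr (_ + _); apply: eq_card => x; rewrite !inE.
by case: (x == e).
Qed.

Lemma card_eq_in (T : finType) (E : {set {set T}}) (p q : pred {set T}) :
  {in E, p =1 q} -> #|[set x in E | p x]| = #|[set x in E | q x]|.
Proof.
move=> h; apply: eq_card => x; rewrite !inE.
by case xE: (x \in E) => //=; rewrite h.
Qed.

Lemma upd_rem (T : finType) (E E' : {set {set T}}) e (f : {ffun {set T} -> bool}) b v :
  e \in E -> E' = E :\ e ->
  [/\ dg E v = (v \in e) + dg E' v,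
      ps E (upd f e b) v = ((v \in e) && b) + ps E' f v,
      ng E (upd f e b) v = ((v \in e) && ~~ b) + ng E' f v,
      PP E (upd f e b) = b + PP E' f &
      NN E (upd f e b) = ~~ b + NN E' f].
Proof.
move=> eE ->.
have hu : {in E :\ e, forall x, upd f e b x = f x}.
  by move=> x; rewrite !inE ffunE => /andP[/negbTE -> _].
have ue : upd f e b e = b by rewrite ffunE eqxx.
split.
- by rewrite /dg (cardD1p _ eE).
- rewrite /ps (cardD1p _ eE) /= ue; congr (_ + _).
  by apply: card_eq_in => x xE /=; rewrite hu.
- rewrite /ng (cardD1p _ eE) /= ue; congr (_ + _).
  by apply: card_eq_in => x xE /=; rewrite hu.
- rewrite /PP (cardD1p _ eE) /= ue; congr (_ + _).
  by apply: card_eq_in => x xE /=; rewrite hu.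
- rewrite /NN (cardD1p _ eE) /= ue; congr (_ + _).
  by apply: card_eq_in => x xE /=; rewrite hu.
Qed.

Lemma dg_split (T : finType) (E : {set {set T}}) f v : dg E v = ps E f v + ng E f v.
Proof.
rewrite /dg /ps /ng -(cardsID [set e | f e] [set e in E | v \in e]).
congr (_ + _); apply: eq_card => x; rewrite !inE; by case: (f x); rewrite ?andbT ?andbF.
Qed.

Lemma star_le (T : finType) (E : {set {set T}}) f v : star E f -> ng E f v <= ps E f v.
Proof.
move=> st; have := dg_split E f v.
case: (posnP (dg E v)) => [-> | /st]; lia.
Qed.

Lemma star_even (T : finType) (E : {set {set T}}) f v : star E f -> 0 < dg E v ->
  ~~ odd (dg E v) -> (ng E f v).+2 <= ps E f v.
Proof.
move=> st /[dup] d0 /st h; have := dg_split E f v; have := modn2 (dg E v).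
move=> m sp /negbTE ho; rewrite ho in m; lia.
Qed.

Lemma wf_neq (T : finType) (E : {set {set T}}) a b : wfE E -> [set a; b] \in E -> a != b.
Proof.
move=> wf /wf [x [y [xy e]]]; apply/negP => /eqP ab; subst b.
have hx : x \in [set a; a] by rewrite e !inE eqxx.
have hy : y \in [set a; a] by rewrite e !inE eqxx orbT.
move: hx hy; rewrite !inE !orbb => /eqP hx /eqP hy.
by rewrite hx hy eqxx in xy.
Qed.

Lemma wf_rem (T : finType) (E : {set {set T}}) e : wfE E -> wfE (E :\ e).
Proof. by move=> wf x; rewrite inE => /andP[_ /wf]. Qed.

Lemma nb_avoid (T : finType) (E : {set {set T}}) (S : {set T}) v :
  wfE E -> #|S| < dg E v -> exists y, [set v; y] \in E /\ y \notin S.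
Proof.
move=> wf hS.
case: (boolP [exists y, ([set v; y] \in E) && (y \notin S)]).
  by move=> /existsP [y /andP [h1 h2]]; exists y.
move=> /existsPn hn; exfalso.
have sub : [set e in E | v \in e] \subset [set [set v; y] | y in S].
  apply/subsetP => e; rewrite inE => /andP [eE ve].
  have [x [y [xy ee]]] := wf e eE.
  have [z ez] : exists z, e = [set v; z].
    move: ve; rewrite ee !inE => /orP [] /eqP ->; first by exists y.
    by exists x; rewrite setUC.
  apply/imsetP; exists z => //.
  by move: (hn z); rewrite -ez eE /= negbK.
have := subset_leq_card sub; have := leq_imset_card (fun y => [set v; y]) S.
move: hS; rewrite /dg => hS h1 h2. by have := leq_trans h2 h1; rewrite leqNgt hS.
Qed.

Lemma odd2 n : odd n -> n %% 2 = 1.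
Proof. by rewrite modn2 => ->. Qed.
Lemma even2 n : ~~ odd n -> n %% 2 = 0.
Proof. by rewrite modn2 => /negbTE ->. Qed.

Lemma dg_rem (T : finType) (E E' : {set {set T}}) e z :
  e \in E -> E' = E :\ e -> dg E z = (z \in e) + dg E' z.
Proof. by move=> eE ->; rewrite /dg (cardD1p _ eE). Qed.

Lemma star_plus (T : finType) (E E' : {set {set T}}) e f :
  e \in E -> E' = E :\ e -> star E' f -> star E (upd f e true).
Proof.
move=> eE hE st z hz; have [d p n _ _] := upd_rem f true z eE hE; rewrite p n andbF /=.
case ze: (z \in e) => /=; first by have := star_le z st; lia.
by rewrite d ze in hz; have := st z hz; lia.
Qed.

Lemma star_minus (T : finType) (E E' : {set {set T}}) e f :
  e \in E -> E' = E :\ e -> star E' f ->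
  (forall z, z \in e -> (ng E' f z).+2 <= ps E' f z) ->
  star E (upd f e false).
Proof.
move=> eE hE st h z hz; have [d p n _ _] := upd_rem f false z eE hE; rewrite p n andbF /=.
case ze: (z \in e) => /=; first by have := h z ze; lia.
by rewrite d ze in hz; have := st z hz; lia.
Qed.

Lemma NI_rem (T : finType) (E E' : {set {set T}}) e : e \in E -> E' = E :\ e -> NI E' \subset NI E.
Proof.
move=> eE hE; apply/subsetP => z; rewrite !inE (dg_rem z eE hE); lia.
Qed.

Lemma sub_D1 (T : finType) (A B : {set T}) a : a \in A -> B \subset A :\ a -> #|B| < #|A|.
Proof.
move=> aA /subset_leq_card; rewrite (cardsD1 a A) aA; lia.
Qed.

Lemma sub_D2 (T : finType) (A B : {set T}) a b : a \in A -> b \in A -> a != b ->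
  B \subset A :\ a :\ b -> #|B| + 2 <= #|A|.
Proof.
move=> aA bA ab /subset_leq_card; rewrite (cardsD1 a A) aA (cardsD1 b (A :\ a)) !inE bA eq_sym ab.
lia.
Qed.

Lemma sub_DU (T : finType) (A B : {set T}) a b : a \in A ->
  B \subset (A :\ a) :|: [set b] -> #|B| <= #|A|.
Proof.
move=> aA /subset_leq_card h; apply: (leq_trans h).
have := cardsU (A :\ a) [set b]; rewrite cards1 (cardsD1 a A) aA; lia.
Qed.

Lemma card_le2_mem (T : finType) (A : {set T}) a b z : #|A| <= 2 -> a \in A -> b \in A ->
  a != b -> z \in A -> (z == a) || (z == b).
Proof.
move=> hA aA bA ab zA; apply/negPn/negP => hz.
have sub : z |: [set a; b] \subset A.
  apply/subsetP => y; rewrite !inE => /orP [/eqP -> //| /orP [] /eqP -> //].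
have := subset_leq_card sub; rewrite cardsU1 cards2 ab !inE.
by move: hz; case: (z == a); case: (z == b) => //= _; lia.
Qed.

Lemma card_le1_mem (T : finType) (A : {set T}) a z : #|A| <= 1 -> a \in A -> z \in A -> z = a.
Proof.
move=> hA aA zA; apply/eqP/negPn/negP => hz.
have sub : [set z; a] \subset A by apply/subsetP => y; rewrite !inE => /orP [] /eqP ->.
by have := subset_leq_card sub; rewrite cards2 hz; lia.
Qed.

Lemma EV_out (T : finType) (E : {set {set T}}) z : z \notin EV E -> 0 < dg E z -> odd (dg E z).
Proof. by rewrite inE => /nandP [/negP //| /negPn]. Qed.

Lemma caseA_EV (T : finType) (E E' : {set {set T}}) u v :
  [set u; v] \in E -> E' = E :\ [set u; v] -> dg E u = 1 -> EV E = set0 ->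
  EV E' \subset [set v].
Proof.
move=> eE hE du ev0; apply/subsetP => z; rewrite [z \in EV _]inE => /andP [hz ho].
have d := dg_rem z eE hE; rewrite !inE in d *.
case: (eqVneq z v) => // zv; case: (eqVneq z u) => [ezu|zu].
  by subst z; exfalso; move: d; rewrite du eqxx /=; lia.
rewrite (negbTE zu) (negbTE zv) /= in d.
have : z \in EV E by rewrite inE d hz ho.
by rewrite ev0 inE.
Qed.

Lemma caseA (T : finType) (E E' : {set {set T}}) u v f :
  wfE E -> [set u; v] \in E -> E' = E :\ [set u; v] -> dg E u = 1 -> EV E = set0 ->
  star E' f -> bnd E' f ->
  star E (upd f [set u; v] true) /\ bnd E (upd f [set u; v] true).
Proof.
move=> wf eE hE du ev0 st bd; split; first exact: star_plus hE st.
have uv := wf_neq wf eE.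
have hEV := subset_leq_card (caseA_EV eE hE du ev0); rewrite cards1 in hEV.
have subNI : NI E' \subset NI E :\ u.
  apply/subsetP => z; rewrite !inE => hz.
  have d := dg_rem z eE hE; rewrite !inE in d.
  case: (eqVneq z u) => [ezu|zu] /=; last lia.
  by subst z; move: d; rewrite du eqxx /=; lia.
have vNI : v \in NI E :\ u.
  rewrite !inE eq_sym uv /= (dg_rem v eE hE) !inE eqxx orbT; lia.
have uNI : u \in NI E by rewrite inE du.
have h1 := subset_leq_card subNI.
have h2 : 0 < #|NI E :\ u| by apply/card_gt0P; exists v.
have h3 := cardsD1 u (NI E); rewrite uNI in h3.
have [_ _ _ hP hN] := upd_rem f true u eE hE.
move: bd; rewrite /bnd hP hN ev0 cards0 /=.
lia.
Qed.

Lemma caseB_EV (T : finType) (E E' : {set {set T}}) a b :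
  [set a; b] \in E -> E' = E :\ [set a; b] -> EV E = set0 ->
  EV E' \subset [set a; b].
Proof.
move=> eE hE ev0; apply/subsetP => z; rewrite [z \in EV _]inE => /andP [hz ho].
have d := dg_rem z eE hE; rewrite !inE in d *.
case: (eqVneq z a) => //= za; case: (eqVneq z b) => //= zb.
rewrite (negbTE za) (negbTE zb) /= in d.
have : z \in EV E by rewrite inE d hz ho.
by rewrite ev0 inE.
Qed.

Lemma caseB (T : finType) (E E' : {set {set T}}) a b f :
  wfE E -> [set a; b] \in E -> E' = E :\ [set a; b] ->
  2 <= dg E a -> 2 <= dg E b -> EV E = set0 ->
  star E' f -> bnd E' f ->
  star E (upd f [set a; b] false) /\ bnd E (upd f [set a; b] false).
Proof.
move=> wf eE hE da db ev0 st bd.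
have oddE z : 0 < dg E z -> odd (dg E z).
  by apply: EV_out; rewrite ev0 inE.
split.
  apply: (star_minus eE hE) => // z hz.
  have hdz : 2 <= dg E z by move: hz; rewrite !inE => /orP [] /eqP ->.
  have oz := odd2 (oddE z (leq_trans (isT : 0 < 2) hdz)).
  have d := dg_rem z eE hE; rewrite hz /= in d.
  apply: star_even => //; first lia.
  apply/negP => /odd2; lia.
have hEV := subset_leq_card (caseB_EV eE hE ev0).
have aNI : a \in NI E'.
  rewrite inE; have := dg_rem a eE hE; rewrite !inE eqxx /=; lia.
have h1 := subset_leq_card (NI_rem eE hE).
have h2 : 0 < #|NI E'| by apply/card_gt0P; exists a.
have [_ _ _ hP hN] := upd_rem f false a eE hE.
move: bd; rewrite /bnd hP hN ev0 cards0 /=.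
lia.
Qed.

Lemma EV_in (T : finType) (E : {set {set T}}) z : z \in EV E -> 0 < dg E z /\ dg E z %% 2 = 0.
Proof. by rewrite inE => /andP [h1 /even2 h2]. Qed.

Lemma EV_notin (T : finType) (E : {set {set T}}) z : z \notin EV E -> 0 < dg E z -> dg E z %% 2 = 1.
Proof. by move=> h1 h2; apply: odd2; apply: EV_out. Qed.

Lemma caseR5_EV (T : finType) (E E' : {set {set T}}) w u :
  w \in EV E -> [set w; u] \in E -> E' = E :\ [set w; u] -> dg E u = 1 ->
  EV E' \subset EV E :\ w.
Proof.
move=> wE eE hE du; apply/subsetP => z; rewrite [z \in EV E']inE => /andP [hz /even2 ho].
have d := dg_rem z eE hE; rewrite !inE in d *.
case: (eqVneq z w) => [ezw|zw].
  by subst z; exfalso; have [h1 h2] := EV_in wE; move: d; rewrite eqxx /=; lia.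
case: (eqVneq z u) => [ezu|zu].
  by subst z; exfalso; move: d; rewrite du eqxx orbT /=; lia.
rewrite (negbTE zu) (negbTE zw) /= in d.
by rewrite d hz /=; apply/negP => /odd2; lia.
Qed.

Lemma caseR5 (T : finType) (E E' : {set {set T}}) w u f :
  wfE E -> w \in EV E -> [set w; u] \in E -> E' = E :\ [set w; u] -> dg E u = 1 ->
  #|EV E| <= 2 -> star E' f -> bnd E' f ->
  star E (upd f [set w; u] true) /\ bnd E (upd f [set w; u] true).
Proof.
move=> wf wE eE hE du hk st bd; split; first exact: star_plus hE st.
have hEV := sub_D1 wE (caseR5_EV wE eE hE du).
have subNI : NI E' \subset NI E :\ u.
  apply/subsetP => z; rewrite !inE => hz.
  have d := dg_rem z eE hE; rewrite !inE in d.
  case: (eqVneq z u) => [ezu|zu] /=; last lia.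
  by subst z; move: d; rewrite du eqxx orbT /=; lia.
have uNI : u \in NI E by rewrite inE du.
have h1 := sub_D1 uNI subNI.
have wNI : w \in NI E'.
  have [h2 h3] := EV_in wE.
  rewrite inE; have := dg_rem w eE hE; rewrite !inE eqxx /=; lia.
have h2 : 0 < #|NI E'| by apply/card_gt0P; exists w.
have [_ _ _ hP hN] := upd_rem f true u eE hE.
move: bd; rewrite /bnd hP hN /=.
lia.
Qed.

Lemma caseR2_EV (T : finType) (E E' : {set {set T}}) a b :
  a \in EV E -> b \in EV E -> [set a; b] \in E -> E' = E :\ [set a; b] ->
  EV E' \subset EV E :\ a :\ b.
Proof.
move=> aE bE eE hE; apply/subsetP => z; rewrite [z \in EV E']inE => /andP [hz /even2 ho].
have d := dg_rem z eE hE; rewrite !inE in d *.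
case: (eqVneq z a) => [eza|za].
  by subst z; exfalso; have [h1 h2] := EV_in aE; move: d; rewrite eqxx /=; lia.
case: (eqVneq z b) => [ezb|zb].
  by subst z; exfalso; have [h1 h2] := EV_in bE; move: d; rewrite eqxx orbT /=; lia.
rewrite (negbTE za) (negbTE zb) /= in d.
by rewrite d hz /=; apply/negP => /odd2; lia.
Qed.

Lemma caseR2 (T : finType) (E E' : {set {set T}}) a b f :
  wfE E -> a \in EV E -> b \in EV E -> [set a; b] \in E -> E' = E :\ [set a; b] ->
  #|EV E| <= 2 ->
  star E' f -> bnd E' f ->
  star E (upd f [set a; b] true) /\ bnd E (upd f [set a; b] true).
Proof.
move=> wf aE bE eE hE hk st bd; split; first exact: star_plus hE st.
have ab := wf_neq wf eE.
have hEV := sub_D2 aE bE ab (caseR2_EV aE bE eE hE).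
have aNI : a \in NI E'.
  have [h2 h3] := EV_in aE.
  rewrite inE; have := dg_rem a eE hE; rewrite !inE eqxx /=; lia.
have h1 := subset_leq_card (NI_rem eE hE).
have h2 : 0 < #|NI E'| by apply/card_gt0P; exists a.
have [_ _ _ hP hN] := upd_rem f true a eE hE.
move: bd; rewrite /bnd hP hN /=.
lia.
Qed.

Ltac clean := repeat match goal with
 | H : is_true (_ \in _) |- _ => clear H
 | H : is_true (_ \notin _) |- _ => clear H
 | H : is_true (_ != _) |- _ => clear H
 | H : @eq {set _} _ _ |- _ => clear H
 | H : wfE _ |- _ => clear H
 | H : star _ _ |- _ => clear H
 | H : forall _, _ |- _ => clear H
 end.
Ltac clia := clean; lia.

Lemma two_in (T : finType) (E E1 : {set {set T}}) e1 e2 :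
  e1 \in E -> e2 \in E -> e1 != e2 -> E1 = E :\ e1 -> e2 \in E1.
Proof. by move=> _ e2E ne ->; rewrite !inE eq_sym ne. Qed.

Lemma set2_neq (T : finType) (a b c d : T) : a \notin [set c; d] -> [set a; b] != [set c; d].
Proof. by move=> h; apply/negP => /eqP e; move: h; rewrite -e !inE eqxx. Qed.

Lemma caseR1 (T : finType) (E E1 E2 : {set {set T}}) w x y f :
  wfE E -> w \in EV E -> x \notin EV E -> y \notin EV E -> y != w -> 2 <= dg E y ->
  [set w; x] \in E -> [set x; y] \in E ->
  E1 = E :\ [set x; y] -> E2 = E1 :\ [set w; x] -> #|EV E| <= 2 ->
  #|EV E2| <= 2 /\
  (star E2 f -> bnd E2 f ->
   star E (upd (upd f [set w; x] true) [set x; y] false) /\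
   bnd E (upd (upd f [set w; x] true) [set x; y] false)).
Proof.
move=> wf wE xE yE yw dy e2E e1E h1 h2 hk.
have wx := wf_neq wf e2E; have xy := wf_neq wf e1E.
have ne : [set x; y] != [set w; x].
  apply/negP => /eqP e; have : y \in [set w; x] by rewrite -e !inE eqxx ?orbT.
  by rewrite !inE (negbTE yw) eq_sym (negbTE xy).
have e2E1 := two_in e1E e2E ne h1.
have [dw1 dw2] := EV_in wE.
have dgz z : dg E z = (z \in [set x; y]) + ((z \in [set w; x]) + dg E2 z).
  by rewrite (dg_rem z e1E h1) (dg_rem z e2E1 h2).
have dx := dgz x; rewrite !inE eqxx ?orbT /= in dx.
have dy' := dgz y; rewrite !inE eqxx ?orbT (eq_sym y x) (negbTE xy) (negbTE yw) /= in dy'.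
have dw := dgz w; rewrite !inE eqxx ?orbT (negbTE wx) (eq_sym w y) (negbTE yw) /= in dw.
have ox : dg E x %% 2 = 1 by apply: EV_notin => //; clia.
have oy : dg E y %% 2 = 1 by apply: EV_notin => //; clia.
have sub : EV E2 \subset (EV E :\ w) :|: [set y].
  apply/subsetP => z; rewrite [z \in EV E2]inE => /andP [hz /even2 ho].
  rewrite !inE.
  case: (eqVneq z y) => [->|zy]; first by rewrite orbT.
  case: (eqVneq z w) => [ezw|zw]; first by subst z; exfalso; clia.
  case: (eqVneq z x) => [ezx|zx]; first by subst z; exfalso; clia.
  have := dgz z; rewrite !inE (negbTE zy) (negbTE zw) (negbTE zx) /= => dz.
  rewrite orbF dz hz /=.
  by apply/negP => /odd2 h; clia.
have hk2 := sub_DU wE sub.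
split; first clia.
move=> st bd.
have st1 : star E1 (upd f [set w; x] true) by apply: (star_plus e2E1 h2 st).
split.
  apply: (star_minus e1E h1 st1) => z.
  have [_ p n _ _] := upd_rem f true z e2E1 h2.
  rewrite p n andbF /=.
  rewrite !inE => /orP [] /eqP ->.
    rewrite eqxx ?orbT /=.
    have := st x; clia.
  rewrite (negbTE yw) (eq_sym y x) (negbTE xy) /=.
  apply: (star_even st); first clia.
  by apply/negP => /odd2 h; clia.
have [_ _ _ hP1 hN1] := upd_rem (upd f [set w; x] true) false x e1E h1.
have [_ _ _ hP2 hN2] := upd_rem f true x e2E1 h2.
have wNI : w \in NI E2 by rewrite inE; clia.
have n1 := subset_leq_card (NI_rem e1E h1).
have n2 := subset_leq_card (NI_rem e2E1 h2).
have n3 : 0 < #|NI E2| by apply/card_gt0P; exists w.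
move: bd; rewrite /bnd hP1 hN1 hP2 hN2 /=.
clia.
Qed.

Lemma caseR6 (T : finType) (E E1 E2 : {set {set T}}) x y1 y2 f :
  wfE E -> x \notin EV E -> y1 != y2 -> dg E y1 = 1 -> dg E y2 = 1 ->
  [set x; y1] \in E -> [set x; y2] \in E ->
  E1 = E :\ [set x; y1] -> E2 = E1 :\ [set x; y2] -> #|EV E| <= 2 ->
  #|EV E2| <= 2 /\
  (star E2 f -> bnd E2 f ->
   star E (upd (upd f [set x; y2] true) [set x; y1] true) /\
   bnd E (upd (upd f [set x; y2] true) [set x; y1] true)).
Proof.
move=> wf xE y12 d1 d2 e1E e2E h1 h2 hk.
have xy1 := wf_neq wf e1E; have xy2 := wf_neq wf e2E.
have ne : [set x; y1] != [set x; y2].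
  apply/negP => /eqP e; have : y1 \in [set x; y2] by rewrite -e !inE eqxx ?orbT.
  by rewrite !inE (negbTE y12) eq_sym (negbTE xy1).
have e2E1 := two_in e1E e2E ne h1.
have dgz z : dg E z = (z \in [set x; y1]) + ((z \in [set x; y2]) + dg E2 z).
  by rewrite (dg_rem z e1E h1) (dg_rem z e2E1 h2).
have dx := dgz x; rewrite !inE eqxx ?orbT /= in dx.
have dy1 := dgz y1; rewrite !inE eqxx ?orbT (eq_sym y1 x) (negbTE xy1) (negbTE y12) /= in dy1.
have dy2 := dgz y2; rewrite !inE eqxx ?orbT (eq_sym y2 x) (negbTE xy2) (eq_sym y2 y1) (negbTE y12) /= in dy2.
have ox : dg E x %% 2 = 1 by apply: EV_notin => //; clia.
have sub : EV E2 \subset EV E.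
  apply/subsetP => z; rewrite [z \in EV E2]inE => /andP [hz /even2 ho].
  case: (eqVneq z x) => [ezx|zx]; first by subst z; exfalso; clia.
  case: (eqVneq z y1) => [ez|zy1]; first by subst z; exfalso; clia.
  case: (eqVneq z y2) => [ez|zy2]; first by subst z; exfalso; clia.
  have := dgz z; rewrite !inE (negbTE zy1) (negbTE zy2) (negbTE zx) /= => dz.
  rewrite dz hz /=.
  by apply/negP => /odd2 h; clia.
have hk2 := subset_leq_card sub.
split; first clia.
move=> st bd.
have st1 : star E1 (upd f [set x; y2] true) by apply: (star_plus e2E1 h2 st).
split; first exact: (star_plus e1E h1 st1).
have [_ _ _ hP1 hN1] := upd_rem (upd f [set x; y2] true) true x e1E h1.
have [_ _ _ hP2 hN2] := upd_rem f true x e2E1 h2.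
have xNI : x \in NI E2 by rewrite inE; clia.
have subNI : NI E2 \subset NI E :\ y1 :\ y2.
  apply/subsetP => z; rewrite !inE => hz.
  case: (eqVneq z y2) => [ez|zy2]; first by subst z; clia.
  case: (eqVneq z y1) => [ez|zy1]; first by subst z; clia.
  have := dgz z; clia.
have y1N : y1 \in NI E by rewrite inE d1.
have y2N : y2 \in NI E by rewrite inE d2.
have n1 := sub_D2 y1N y2N y12 subNI.
have n3 : 0 < #|NI E2| by apply/card_gt0P; exists x.
move: bd; rewrite /bnd hP1 hN1 hP2 hN2 /=.
clia.
Qed.

Lemma caseR8 (T : finType) (E E1 E2 : {set {set T}}) w x u f :
  wfE E -> w \in EV E -> x \notin EV E -> dg E u = 1 ->
  [set w; x] \in E -> [set x; u] \in E ->
  E1 = E :\ [set x; u] -> E2 = E1 :\ [set w; x] -> #|EV E| = 2 ->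
  #|EV E2| <= 2 /\
  (star E2 f -> bnd E2 f ->
   star E (upd (upd f [set w; x] true) [set x; u] true) /\
   bnd E (upd (upd f [set w; x] true) [set x; u] true)).
Proof.
move=> wf wE xE du e2E e1E h1 h2 hk.
have wx := wf_neq wf e2E; have xu := wf_neq wf e1E.
have [dw1 dw2] := EV_in wE.
have uw : u != w by apply/negP => /eqP euw; subst u; clia.
have ne : [set x; u] != [set w; x].
  apply/negP => /eqP e; have : u \in [set w; x] by rewrite -e !inE eqxx ?orbT.
  by rewrite !inE (negbTE uw) eq_sym (negbTE xu).
have e2E1 := two_in e1E e2E ne h1.
have dgz z : dg E z = (z \in [set x; u]) + ((z \in [set w; x]) + dg E2 z).
  by rewrite (dg_rem z e1E h1) (dg_rem z e2E1 h2).
have dx := dgz x; rewrite !inE eqxx ?orbT /= in dx.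
have du' := dgz u; rewrite !inE eqxx ?orbT (eq_sym u x) (negbTE xu) (negbTE uw) /= in du'.
have dw := dgz w; rewrite !inE eqxx ?orbT (negbTE wx) (eq_sym w u) (negbTE uw) /= in dw.
have ox : dg E x %% 2 = 1 by apply: EV_notin => //; clia.
have sub : EV E2 \subset EV E :\ w.
  apply/subsetP => z; rewrite [z \in EV E2]inE => /andP [hz /even2 ho].
  case: (eqVneq z x) => [ezx|zx]; first by subst z; exfalso; clia.
  case: (eqVneq z u) => [ez|zu]; first by subst z; exfalso; clia.
  case: (eqVneq z w) => [ez|zw]; first by subst z; exfalso; clia.
  have := dgz z; rewrite !inE (negbTE zu) (negbTE zw) (negbTE zx) /= => dz.
  rewrite dz hz /=.
  by apply/negP => /odd2 h; clia.
have hk2 := sub_D1 wE sub.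
split; first clia.
move=> st bd.
have st1 : star E1 (upd f [set w; x] true) by apply: (star_plus e2E1 h2 st).
split; first exact: (star_plus e1E h1 st1).
have [_ _ _ hP1 hN1] := upd_rem (upd f [set w; x] true) true x e1E h1.
have [_ _ _ hP2 hN2] := upd_rem f true x e2E1 h2.
have xNI : x \in NI E2 by rewrite inE; clia.
have subNI : NI E2 \subset NI E :\ u.
  apply/subsetP => z; rewrite !inE => hz.
  case: (eqVneq z u) => [ez|zu]; first by subst z; clia.
  have := dgz z; clia.
have uN : u \in NI E by rewrite inE du.
have n1 := sub_D1 uN subNI.
have n3 : 0 < #|NI E2| by apply/card_gt0P; exists x.
move: bd; rewrite /bnd hP1 hN1 hP2 hN2 hk /=.
clia.
Qed.

Lemma dg_pos (T : finType) (E : {set {set T}}) a b : [set a; b] \in E -> 0 < dg E a.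
Proof. by move=> eE; rewrite (dg_rem a eE erefl) !inE eqxx. Qed.

Lemma main (T : finType) (E : {set {set T}}) :
  wfE E -> #|EV E| <= 2 -> exists f, star E f /\ bnd E f.
Proof.
have [n] := ubnP #|E|; elim: n E => // n IH E hn wf hk.
have IH1 e E' : e \in E -> E' = E :\ e -> #|EV E'| <= 2 -> exists f, star E' f /\ bnd E' f.
  move=> eE hE h; apply: IH => //; last by rewrite hE; exact: wf_rem.
  by move: hn; rewrite hE (cardsD1 e E) eE; clia.
have IH2 e1 e2 E1 E2 : e1 \in E -> E1 = E :\ e1 -> e2 \in E1 -> E2 = E1 :\ e2 ->
    #|EV E2| <= 2 -> exists f, star E2 f /\ bnd E2 f.
  move=> e1E h1 e2E1 h2 h; apply: IH => //.
    move: hn; rewrite h2 h1 (cardsD1 e1 E) e1E.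
    have := cardsD1 e2 (E :\ e1); rewrite -h1 e2E1 h1; clia.
  by rewrite h2 h1; apply: wf_rem; apply: wf_rem.
case: (set_0Vmem E) => [E0 | [e eE]].
  have dg0 v : dg E v = 0.
    by rewrite /dg E0; apply/eqP; rewrite cards_eq0; apply/eqP/setP => x; rewrite !inE.
  exists [ffun _ => true]; split; first by move=> v; rewrite dg0.
  have NI0 : NI E = set0 by apply/setP => v; rewrite !inE dg0.
  have EV0 : EV E = set0 by apply/setP => v; rewrite !inE dg0.
  have c0 (p : pred {set T}) : #|[set x in E | p x]| = 0.
    by apply/eqP; rewrite cards_eq0; apply/eqP/setP => x; rewrite E0 !inE.
  by rewrite /bnd NI0 EV0 cards0 /PP /NN !c0.
have [a [b [ab ee]]] := wf e eE; subst e.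
case: (posnP #|EV E|) => [k0 | kpos].
  have ev0 : EV E = set0 by apply/eqP; rewrite -cards_eq0 k0.
  case: (eqVneq (dg E a) 1) => [da1 | da].
    have h := subset_leq_card (caseA_EV eE erefl da1 ev0); rewrite cards1 in h.
    have [f [st bd]] := IH1 _ _ eE erefl (leq_trans h (isT : 1 <= 2)).
    by exists (upd f [set a; b] true); exact: caseA.
  have eE' : [set b; a] \in E by rewrite setUC.
  case: (eqVneq (dg E b) 1) => [db1 | db].
    have h := subset_leq_card (caseA_EV eE' erefl db1 ev0); rewrite cards1 in h.
    have [f [st bd]] := IH1 _ _ eE' erefl (leq_trans h (isT : 1 <= 2)).
    by exists (upd f [set b; a] true); exact: caseA.
  have h := subset_leq_card (caseB_EV eE erefl ev0); rewrite cards2 in h.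
  have h2 : #|EV (E :\ [set a; b])| <= 2 by apply: (leq_trans h); case: (a != b).
  have [f [st bd]] := IH1 _ _ eE erefl h2.
  exists (upd f [set a; b] false); apply: caseB => //.
    by have := dg_pos eE; move/eqP: da; clia.
  by have := dg_pos eE'; move/eqP: db; clia.
have [w wE] : exists w, w \in EV E by apply/card_gt0P.
have [dw1 dw2] := EV_in wE.
case: (boolP [exists u, ([set w; u] \in E) && (dg E u == 1)]).
  move=> /existsP [u /andP [euE /eqP du]].
  have h := sub_D1 wE (caseR5_EV wE euE erefl du).
  have [f [st bd]] := IH1 _ _ euE erefl (leq_trans (ltnW h) hk).
  by exists (upd f [set w; u] true); exact: caseR5.
move=> /existsPn hn5.
have hx : exists x, [set w; x] \in E /\ x \notin set0.
  by apply: nb_avoid; rewrite ?cards0.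
have [x [wxE _]] := hx.
have wx := wf_neq wf wxE.
have dx2 : 2 <= dg E x.
  have := dg_pos (etrans (esym (congr1 (fun s => s \in E) (setUC [set w] [set x]))) wxE).
  have := hn5 x; rewrite wxE /= => /eqP; clia.
case: (eqVneq #|EV E| 2) => [k2 | k2].
  have [w2 w2E] : exists w2, w2 \in EV E :\ w.
    by apply/card_gt0P; have := cardsD1 w (EV E); rewrite wE k2; clia.
  move: w2E; rewrite in_setD1 => /andP [w2w w2E].
  have ww2 : w != w2 by rewrite eq_sym.
  case: (boolP ([set w; w2] \in E)) => [ew | new].
    have h := sub_D2 wE w2E ww2
      (caseR2_EV wE w2E ew erefl).
    have [f [st bd]] := IH1 _ _ ew erefl (leq_trans (leq_addr _ _) (leq_trans h hk)).
    by exists (upd f [set w; w2] true); exact: caseR2.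
  have xEV : x \notin EV E.
    apply/negP => xE; have := card_le2_mem hk wE w2E ww2 xE.
    case/orP => /eqP exw; first by rewrite exw eqxx in wx.
    by rewrite -exw wxE in new.
  have ox : dg E x %% 2 = 1 by apply: EV_notin => //; clia.
  case: (boolP [exists y, [&& [set x; y] \in E, y != w, y \notin EV E & 2 <= dg E y]]).
    move=> /existsP [y /and4P [xyE yw yE dy]].
    have H1 g := caseR1 g wf wE xEV yE yw dy wxE xyE erefl erefl hk.
    have hk2 := (H1 [ffun=> true]).1.
    have e2E1 : [set w; x] \in E :\ [set x; y].
      rewrite !inE wxE andbT; apply/negP => /eqP e.
      have : y \in [set w; x] by rewrite e !inE eqxx ?orbT.
      by rewrite !inE (negbTE yw) eq_sym (negbTE (wf_neq wf xyE)).
    have [f [st bd]] := IH2 _ _ _ _ xyE erefl e2E1 erefl hk2.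
    by exists (upd (upd f [set w; x] true) [set x; y] false); apply: (H1 f).2.
  move=> /existsPn hn1.
  have [u [xuE uS]] : exists u, [set x; u] \in E /\ u \notin [set w; w2].
    by apply: (nb_avoid wf); rewrite ?cards2; move: ox dx2; case: (w != w2); clia.
  move: uS; rewrite !inE negb_or => /andP [uw uw2].
  have uEV : u \notin EV E.
    apply/negP => uE; have := card_le2_mem hk wE w2E ww2 uE.
    by rewrite (negbTE uw) (negbTE uw2).
  have du : dg E u = 1.
    have := hn1 u; rewrite xuE uw uEV /= -ltnNge.
    have := dg_pos (etrans (esym (congr1 (fun s => s \in E) (setUC [set x] [set u]))) xuE).
    clia.
  have H1 g := caseR8 g wf wE xEV du wxE xuE erefl erefl k2.
  have hk2 := (H1 [ffun=> true]).1.
  have e2E1 : [set w; x] \in E :\ [set x; u].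
    rewrite !inE wxE andbT; apply/negP => /eqP e.
    have : u \in [set w; x] by rewrite e !inE eqxx ?orbT.
    by rewrite !inE (negbTE uw) eq_sym (negbTE (wf_neq wf xuE)).
  have [f [st bd]] := IH2 _ _ _ _ xuE erefl e2E1 erefl hk2.
  by exists (upd (upd f [set w; x] true) [set x; u] true); apply: (H1 f).2.
have k1 : #|EV E| <= 1 by move/eqP: k2; clia.
have xEV : x \notin EV E.
  by apply/negP => xE; have := card_le1_mem k1 wE xE => exw; rewrite exw eqxx in wx.
have ox : dg E x %% 2 = 1 by apply: EV_notin => //; clia.
case: (boolP [exists y, [&& [set x; y] \in E, y != w, y \notin EV E & 2 <= dg E y]]).
  move=> /existsP [y /and4P [xyE yw yE dy]].
  have H1 g := caseR1 g wf wE xEV yE yw dy wxE xyE erefl erefl hk.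
    have hk2 := (H1 [ffun=> true]).1.
  have e2E1 : [set w; x] \in E :\ [set x; y].
    rewrite !inE wxE andbT; apply/negP => /eqP e.
    have : y \in [set w; x] by rewrite e !inE eqxx ?orbT.
    by rewrite !inE (negbTE yw) eq_sym (negbTE (wf_neq wf xyE)).
  have [f [st bd]] := IH2 _ _ _ _ xyE erefl e2E1 erefl hk2.
  by exists (upd (upd f [set w; x] true) [set x; y] false); apply: (H1 f).2.
move=> /existsPn hn1.
have leaf y : [set x; y] \in E -> y != w -> dg E y = 1.
  move=> xyE yw.
  have yEV : y \notin EV E.
    by apply/negP => yE; have := card_le1_mem k1 wE yE => eyw; rewrite eyw eqxx in yw.
  have := hn1 y; rewrite xyE yw yEV /= -ltnNge.
  have := dg_pos (etrans (esym (congr1 (fun s => s \in E) (setUC [set x] [set y]))) xyE).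
  clia.
have [y1 [xy1E y1S]] : exists y, [set x; y] \in E /\ y \notin [set w].
  by apply: (nb_avoid wf); rewrite ?cards1; clia.
move: y1S; rewrite !inE => y1w.
have [y2 [xy2E y2S]] : exists y, [set x; y] \in E /\ y \notin [set w; y1].
  by apply: (nb_avoid wf); rewrite ?cards2; move: ox dx2; case: (w != y1); clia.
move: y2S; rewrite !inE negb_or => /andP [y2w y2y1].
have d1 := leaf y1 xy1E y1w; have d2 := leaf y2 xy2E y2w.
have y12 : y1 != y2 by rewrite eq_sym.
have H1 g := caseR6 g wf xEV y12 d1 d2 xy1E xy2E erefl erefl hk.
have hk2 := (H1 [ffun=> true]).1.
have e2E1 : [set x; y2] \in E :\ [set x; y1].
  rewrite !inE xy2E andbT; apply/negP => /eqP e.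
  have : y2 \in [set x; y1] by rewrite -e !inE eqxx ?orbT.
  by rewrite !inE (negbTE y2y1) eq_sym (negbTE (wf_neq wf xy2E)).
have [f [st bd]] := IH2 _ _ _ _ xy1E erefl e2E1 erefl hk2.
by exists (upd (upd f [set x; y2] true) [set x; y1] true); apply: (H1 f).2.
Qed.

Import Order.TTheory GRing.Theory Num.Theory.

Lemma sum_sgn (T : finType) (E : {set {set T}}) (p : pred {set T}) (f : {ffun {set T} -> bool}) :
  (\sum_(e in E | p e) sgn (f e) =
   (#|[set e in E | p e && f e]|)%:Z - (#|[set e in E | p e && ~~ f e]|)%:Z)%R.
Proof.
rewrite (bigID (fun e => f e)) /=; congr (_ + _)%R.
  rewrite (eq_big (fun e => e \in [set e in E | p e && f e]) (fun _ => 1%R)).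
  - by rewrite sumr_const natz.
  - by move=> e; rewrite !inE andbA.
  - by move=> e /andP [_ ->].
rewrite (eq_big (fun e => e \in [set e in E | p e && ~~ f e]) (fun _ => (-1)%R)).
- by rewrite sumr_const mulNrn natz.
- by move=> e; rewrite !inE andbA.
- by move=> e /andP [_ /negbTE ->].
Qed.

Lemma edges_wf (T : finType) (adj : rel T) : irreflexive adj -> wfE (edges adj).
Proof.
move=> irr e; rewrite inE => /existsP [x /existsP [y /andP [axy /eqP ->]]].
exists x, y; split => //; apply/negP => /eqP exy; by rewrite exy irr in axy.
Qed.

Lemma edge_in (T : finType) (adj : rel T) u v : adj u v -> [set u; v] \in edges adj.
Proof. by move=> h; rewrite inE; apply/existsP; exists u; apply/existsP; exists v; rewrite h eqxx. Qed.

Lemma set2_inj (T : finType) (v : T) : injective (fun w => [set v; w]).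
Proof.
move=> w1 w2 /= e.
have h1 : w1 \in [set v; w2] by rewrite -e !inE eqxx orbT.
have h2 : w2 \in [set v; w1] by rewrite e !inE eqxx orbT.
move: h1 h2; rewrite !inE => /orP [/eqP e1 | /eqP //] /orP [/eqP e2 | /eqP e2].
  by rewrite e1 e2.
by rewrite e2.
Qed.

Lemma dg_deg (T : finType) (adj : rel T) v : symmetric adj -> irreflexive adj ->
  dg (edges adj) v = deg adj v.
Proof.
move=> sym irr; rewrite /dg /deg.
have -> : [set e in edges adj | v \in e] = [set [set v; w] | w in [set w | adj v w]].
  apply/setP => e; apply/idP/idP.
    rewrite inE => /andP [].
    rewrite inE => /existsP [x /existsP [y /andP [axy /eqP ee]]].
    rewrite ee !inE => /orP [] /eqP evx; apply/imsetP.
      by exists y; rewrite ?inE evx.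
    by exists x; rewrite ?inE evx 1?sym // setUC.
  move=> /imsetP [w]; rewrite inE => avw ->.
  by rewrite inE edge_in //= !inE eqxx.
by rewrite card_imset //; exact: set2_inj.
Qed.

Lemma both_in (T : finType) (E : {set {set T}}) e u v : wfE E -> e \in E ->
  u \in e -> v \in e -> u != v -> e = [set u; v].
Proof.
move=> wf eE; have [x [y [xy ->]]] := wf e eE.
rewrite !inE => /orP [] /eqP -> /orP [] /eqP -> //; rewrite ?eqxx //.
by move=> _; rewrite setUC.
Qed.

Lemma closed_ge1 (T : finType) (adj : rel T) (f : {ffun {set T} -> bool}) u v :
  irreflexive adj -> star (edges adj) f -> adj u v -> (1 <= closed_sum adj f u v)%R.
Proof.
move=> irr st auv.
rewrite /closed_sum sum_sgn.
move: st.
set E := edges adj.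
have wf : wfE E := edges_wf irr.
have uv : u != v by apply/negP => /eqP e; rewrite e irr in auv.
have eE : [set u; v] \in E := edge_in auv.
clearbody E => st.
set A := [set e in E | (u \in e) && f e].
set B := [set e in E | (v \in e) && f e].
set A' := [set e in E | (u \in e) && ~~ f e].
set B' := [set e in E | (v \in e) && ~~ f e].
have -> : [set e in E | ((u \in e) || (v \in e)) && f e] = A :|: B.
  by apply/setP => e; rewrite !inE; case: (e \in E); case: (u \in e); case: (v \in e); case: (f e).
have -> : [set e in E | ((u \in e) || (v \in e)) && ~~ f e] = A' :|: B'.
  by apply/setP => e; rewrite !inE; case: (e \in E); case: (u \in e); case: (v \in e); case: (f e).
have hAB : #|A :&: B| <= 1.
  rewrite -(cards1 [set u; v]); apply: subset_leq_card; apply/subsetP => e.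
  rewrite !inE => /andP [/and3P [eE1 ue _] /and3P [_ ve _]].
  by rewrite (both_in wf eE1 ue ve uv).
have c1 := cardsU A B; have c2 := cardsU A' B'.
have su : 0 < dg E u by rewrite (dg_rem u eE erefl) !inE eqxx.
have sv : 0 < dg E v by rewrite (dg_rem v eE erefl) !inE eqxx orbT.
have h1 := st u su; have h2 := st v sv.
move: h1 h2; rewrite /ps /ng -/A -/B -/A' -/B' => h1 h2.
have c3 := subset_leq_card (subsetIl A' B').
clear -c1 c2 hAB h1 h2 c3.
lia.
Qed.

Theorem mainTheorem8 (T : finType) (adj : rel T)
    (adj_sym : symmetric adj) (adj_irr : irreflexive adj)
    (Heven : v_even adj = 1%N) :
  (gamma_s' adj <= (Posz #|T| - 1)%R)%R.
Proof.
set E := edges adj.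
have wf : wfE E := edges_wf adj_irr.
have hk : #|EV E| <= 1.
  rewrite -Heven /v_even; apply: subset_leq_card; apply/subsetP => v.
  by rewrite !inE dg_deg // => /andP [_ ->].
have [f [st bd]] := main wf (leq_trans hk (isT : 1 <= 2)).
have sedf : is_SEDF adj f.
  apply/forallP => u; apply/forallP => v; apply/implyP => auv.
  exact: closed_ge1.
apply: le_trans (bigmin_le_cond _ _ sedf) _.
have hw : weight adj f = ((PP E f)%:Z - (NN E f)%:Z)%R.
  rewrite /weight.
  have := sum_sgn E xpredT f.
  rewrite (eq_bigl (fun e => e \in E)) => [->|e]; last by rewrite andbT.
  by rewrite /PP /NN.
rewrite hw.
have nT : #|NI E| <= #|T| by apply: max_card.
have T1 : 0 < #|T|.
  have := max_card [set v | ~~ odd (deg adj v)]; rewrite -/(v_even adj) Heven.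
  by [].
move: bd; rewrite /bnd.
have -> : (#|EV E| == 2) = false by apply/negbTE; rewrite neq_ltn; apply/orP; left; apply: (leq_ltn_trans hk).
clear -nT T1.
move: (PP E f) (NN E f) (#|NI E|) nT T1 => P N k nT T1 h.
lia.
Qed.
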